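(* Let $(\varepsilon_i)_{i\ge4}$ and $(\varepsilon'_i)_{i\ge l}$ be elements of $\mathcal{D}^\infty$ such that $\sum_{i=4}^\infty\varepsilon_i\alpha^i=\sum_{i=l}^\infty\varepsilon'_i\alpha^i$, where $l<4$ and $\varepsilon'_l=1$. Then $\varepsilon'_l\alpha^l+\varepsilon'_{l+1}\alpha^{l+1}+\cdots+\varepsilon'_3\alpha^3$ belongs to $S$. In particular $l\ge-3$, and $\varepsilon'_l\alpha^l+\cdots+\varepsilon'_3\alpha^3=\alpha^{-3}+\alpha^{-2}+1+\alpha^3$ if $l=-3$; $\varepsilon'_l\alpha^l+\cdots+\varepsilon'_3\alpha^3=\alpha^{-2}+\alpha^{-1}+\alpha$ if $l=-2$; $\varepsilon'_l\alpha^l+\cdots+\varepsilon'_3\alpha^3=\alpha^{-1}+1+\alpha^2$ if $l=-1$.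
   Context: Let $P(x)=x^4-x^3-x^2-x-1$. Its roots are $\beta=\beta_1\approx 1.9275$, a real root $\beta_2\approx-0.7748$, and a pair of complex conjugate roots $\beta_3\approx-0.0763+0.8147i$ and $\overline{\beta_3}$. For $i\in\mathbb{Z}$ put $\alpha^i=(\beta_2^i,\beta_3^i)\in\mathbb{R}\times\mathbb{C}$, with $\alpha^0=1=(1,1)$; arithmetic is componentwise and an integer $n$ is identified with $(n,n)$. $\mathcal{D}^\infty$ is the set of sequences $(\varepsilon_i)_{i\ge l}$, $l\in\mathbb{Z}$, with $\varepsilon_i\in\{0,1\}$ and containing no four consecutive $1$'s. $S$ is the set $\{\pm\sum_{i=0}^3c_i\alpha^i : c_i\in\{0,1\},\ c_0c_1c_2c_3\neq1111\}\cup\{\pm(\alpha^{-1}+1+\alpha^2),\pm(\alpha^{-2}+\alpha^{-1}+\alpha),\pm(\alpha^{-3}+\alpha^{-2}+1+\alpha^3)\}$. *)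

(* Defs.v *)
From Stdlib Require Import Reals ZArith Lra.
From Coquelicot Require Import Coquelicot.
Open Scope R_scope.

Definition PR (x : R) : R := x ^ 4 - x ^ 3 - x ^ 2 - x - 1.
Definition PC (z : C) : C :=
  (z ^ 4 - z ^ 3 - z ^ 2 - z - RtoC 1)%C.

Definition Cpowz (z : C) (k : Z) : C :=
  match k with
  | Z0 => RtoC 1
  | Zpos p => Cpow z (Pos.to_nat p)
  | Zneg p => Cinv (Cpow z (Pos.to_nat p))
  end.

(* Elements of R x C with componentwise arithmetic; alpha^k = (b2^k, b3^k). *)
Definition RC := (R * C)%type.
Definition RCadd (u v : RC) : RC := (fst u + fst v, (snd u + snd v)%C).
Definition RCopp (u : RC) : RC := (- fst u, (- snd u)%C).
Definition RCzero : RC := (0, RtoC 0).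
Definition alpha_pow (b2 : R) (b3 : C) (k : Z) : RC := (powerRZ b2 k, Cpowz b3 k).

(* Digit sequences (eps_i)_{i >= l}: eps : Z -> bool, only values at i >= l matter.
   Membership in D^infty: no four consecutive 1's (among indices >= l). *)
Definition D_inf (l : Z) (eps : Z -> bool) : Prop :=
  forall i : Z, (l <= i)%Z ->
    ~ (eps i = true /\ eps (i + 1)%Z = true /\ eps (i + 2)%Z = true /\ eps (i + 3)%Z = true).

Definition digit (b : bool) : R := if b then 1 else 0.

Definition term_R (b2 : R) (l : Z) (eps : Z -> bool) (n : nat) : R :=
  digit (eps (l + Z.of_nat n)%Z) * powerRZ b2 (l + Z.of_nat n).
Definition term_C (b3 : C) (l : Z) (eps : Z -> bool) (n : nat) : C :=
  (RtoC (digit (eps (l + Z.of_nat n)%Z)) * Cpowz b3 (l + Z.of_nat n))%C.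

Fixpoint fin_sum (b2 : R) (b3 : C) (l : Z) (eps : Z -> bool) (m : nat) : RC :=
  match m with
  | O => RCzero
  | S m' => RCadd (fin_sum b2 b3 l eps m')
                  (term_R b2 l eps m', term_C b3 l eps m')
  end.

Definition head_sum (b2 : R) (b3 : C) (l : Z) (eps : Z -> bool) : RC :=
  fin_sum b2 b3 l eps (Z.to_nat (4 - l)).

Definition bR (b : bool) : R := digit b.

Definition S_set (b2 : R) (b3 : C) (v : RC) : Prop :=
  let a := alpha_pow b2 b3 in
  let sc (c : bool) (k : Z) : RC := (bR c * fst (a k), (RtoC (bR c) * snd (a k))%C) in
  let pm (w : RC) := v = w \/ v = RCopp w in
  (exists c0 c1 c2 c3 : bool,
      ~ (c0 = true /\ c1 = true /\ c2 = true /\ c3 = true) /\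
      pm (RCadd (sc c0 0%Z) (RCadd (sc c1 1%Z) (RCadd (sc c2 2%Z) (sc c3 3%Z)))))
  \/ pm (RCadd (a (-1)%Z) (RCadd (a 0%Z) (a 2%Z)))
  \/ pm (RCadd (a (-2)%Z) (RCadd (a (-1)%Z) (a 1%Z)))
  \/ pm (RCadd (a (-3)%Z) (RCadd (a (-2)%Z) (RCadd (a 0%Z) (a 3%Z)))).

(* Main.v *)
Require Import Defs.
From Stdlib Require Import Reals Lra Psatz ZArith List Bool Lia.
From Coquelicot Require Import Coquelicot.
Import ListNotations.
Open Scope R_scope.

Definition Z4 := (Z*Z*Z*Z)%type.
Definition nxt (a:Z4) (d:Z) : Z4 :=
  match a with (a0,a1,a2,a3) => let e := (a0+d)%Z in ((a1-e)%Z,(a2-e)%Z,(a3-e)%Z,e) end.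
Definition Z4eqb (a b:Z4) : bool :=
  match a, b with (a0,a1,a2,a3), (b0,b1,b2,b3) =>
    Z.eqb a0 b0 && Z.eqb a1 b1 && Z.eqb a2 b2 && Z.eqb a3 b3 end.
Lemma Z4eqb_eq a b : Z4eqb a b = true -> a = b.
Proof. destruct a as [[[a0 a1] a2] a3], b as [[[b0 b1] b2] b3]; simpl.
  intros H. repeat (apply andb_prop in H; destruct H as [H ?]).
  apply Z.eqb_eq in H. repeat match goal with h : Z.eqb _ _ = true |- _ => apply Z.eqb_eq in h end.
  subst; reflexivity. Qed.
Definition mem (l:list Z4) (a:Z4) : bool := existsb (Z4eqb a) l.
Lemma mem_In l a : mem l a = true -> In a l.
Proof. unfold mem. intros H. apply existsb_exists in H. destruct H as [b [Hb E]].
  apply Z4eqb_eq in E. subst; auto. Qed.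
Fixpoint lookup (l : list (Z4*nat)) (a:Z4) : option nat :=
  match l with [] => None | (b,r)::t => if Z4eqb a b then Some r else lookup t a end.
Lemma lookup_In l a r : lookup l a = Some r -> In (a,r) l.
Proof. induction l as [|[b r'] t IH]; simpl; [discriminate|].
  destruct (Z4eqb a b) eqn:E; intros H.
  - inversion H; subst. apply Z4eqb_eq in E; subst; auto.
  - right; auto. Qed.
Definition digs : list Z := [(-1)%Z; 0%Z; 1%Z].


Definition Enc (b2 x y : R) : Prop :=
  (-0.77485 <= b2 <= -0.77475) /\ (0.60023 <= b2^2 <= 0.6004) /\ (-0.46522 <= b2^3 <= -0.46502) /\
  (-0.07639 <= x <= -0.07637) /\ (0.81467 <= y <= 0.81473) /\
  (-0.65795 <= x^2 - y^2 <= -0.65785) /\ (-0.12448 <= 2*x*y <= -0.12443) /\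
  (0.15161 <= x^3 - 3*x*y^2 <= 0.15168) /\ (-0.52655 <= 3*x^2*y - y^3 <= -0.52642).

Lemma b2_enc (t:R) : PR t = 0 -> t < 0 -> -0.77485 <= t <= -0.77475.
Proof.
  intros H H0. unfold PR in H. split.
  - destruct (Rle_dec t (-0.77485)) as [Hl|Hl]; [|lra].
    exfalso. set (s := -0.77485 - t) in *. assert (Hs: 0 <= s) by (unfold s; lra).
    replace t with (-0.77485 - s) in H by (unfold s; ring). nra.
  - destruct (Rle_dec t (-0.77475)) as [Hl|Hl]; [lra|]. exfalso.
    set (u := -t). set (h := 0.77475).
    assert (Hu: 0 < u <= h) by (unfold u,h; lra).
    replace (t^4 - t^3 - t^2 - t - 1) with ((u-h)*(u^3+u^2*h+u*h^2+h^3+u^2+u*h+h^2-u-h+1) + (h^4+h^3-h^2+h-1)) in H by (unfold u; ring).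
    assert (A: h^4+h^3-h^2+h-1 < 0) by (unfold h; lra).
    assert (B: 0 < u^3+u^2*h+u*h^2+h^3+u^2+u*h+h^2-u-h+1) by (unfold h in *; nra).
    nra.
Qed.

Definition gpol (x:R) := 1 + 12*x - 16*x^2 - 24*x^3 - 16*x^4 + 96*x^5 - 64*x^6.
Lemma ga (x:R) : x <= -0.07639 -> gpol x < 0.
Proof. intros H. unfold gpol. set (s := -0.07639 - x). assert (Hs: 0 <= s) by (unfold s; lra).
  replace x with (-0.07639 - s) by (unfold s; lra). nra. Qed.
Lemma gc (x:R) : 1.25 <= x -> gpol x < 0.
Proof. intros H. unfold gpol. set (s := x - 1.25). assert (Hs: 0 <= s) by (unfold s; lra).
  replace x with (1.25 + s) by (unfold s; lra). nra. Qed.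
Definition Rf (u b : R) : R := 12 + 16*(u+b) - 24*(u^2+u*b+b^2) + 16*(u^3+u^2*b+u*b^2+b^3)
  + 96*(u^4+u^3*b+u^2*b^2+u*b^3+b^4) + 64*(u^5+u^4*b+u^3*b^2+u^2*b^3+u*b^4+b^5).
Lemma Rf_pos (u b : R) : 0 <= u <= 0.08 -> 0 <= b <= 0.08 -> Rf u b > 0.
Proof. intros [h1 h2] [h3 h4]. unfold Rf.
  assert (P: 0 <= 16*(u+b) + 16*(u^3+u^2*b+u*b^2+b^3)
  + 96*(u^4+u^3*b+u^2*b^2+u*b^3+b^4) + 64*(u^5+u^4*b+u^3*b^2+u^2*b^3+u*b^4+b^5)).
  { repeat (apply Rplus_le_le_0_compat || apply Rmult_le_pos || apply pow_le); lra. }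
  assert (Q1: u^2 <= 0.0064). { simpl. rewrite Rmult_1_r. replace 0.0064 with (0.08*0.08) by lra. apply Rmult_le_compat; lra. }
  assert (Q2: b^2 <= 0.0064). { simpl. rewrite Rmult_1_r. replace 0.0064 with (0.08*0.08) by lra. apply Rmult_le_compat; lra. }
  assert (Q3: u*b <= 0.0064). { replace 0.0064 with (0.08*0.08) by lra. apply Rmult_le_compat; lra. }
  lra. Qed.
Definition bb : R := 0.07637.
Lemma gb1 (x:R) : -0.07637 <= x -> x <= 0 -> gpol x > 0.
Proof. intros H H1.
  assert (E: forall u b, gpol (-u) - gpol (-b) = (b - u) * Rf u b) by (intros; unfold gpol, Rf; ring).
  assert (P: Rf (-x) bb > 0) by (apply Rf_pos; unfold bb; lra).
  assert (G0: gpol (- bb) > 0) by (unfold gpol, bb; cbn [pow]; lra).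
  specialize (E (-x) bb). replace (- - x) with x in E by ring.
  assert (0 <= (bb - - x) * Rf (-x) bb) by (apply Rmult_le_pos; [unfold bb; lra | lra]).
  lra. Qed.
Lemma gb2 (x:R) : 0 <= x -> x <= 1/4 -> gpol x > 0.
Proof. intros H H1. unfold gpol.
  assert (h2: x^2 <= 0.25*x) by nra. assert (h3: x^3 <= 0.25*x^2) by nra.
  assert (h4: x^4 <= 0.25*x^3) by nra. assert (h6: x^6 <= x^4) by nra. assert (0<= x^5) by nra. nra. Qed.
Lemma Npos (x:R) : 1/4 <= x -> x <= 1.25 -> 0 < 1 + 2*x + 3*x^2 - 4*x^3.
Proof. intros. nra. Qed.

Lemma PC_eqs (x y : R) : PC (x,y) = RtoC 0 ->
  x^4 - 6*x^2*y^2 + y^4 - (x^3 - 3*x*y^2) - (x^2 - y^2) - x - 1 = 0 /\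
  y * (4*x^3 - 4*x*y^2 - 3*x^2 + y^2 - 2*x - 1) = 0.
Proof. intros H. unfold PC in H. injection H as H1 H2. simpl in H1, H2. split; [rewrite <- H1 | rewrite <- H2]; ring. Qed.

Lemma x_enc (x y : R) : PC (x,y) = RtoC 0 -> 0 < y ->
  -0.07639 <= x <= -0.07637 /\ y^2 * (1 - 4*x) = 1 + 2*x + 3*x^2 - 4*x^3.
Proof.
  intros H Hy. destruct (PC_eqs x y H) as [E1 E2].
  assert (E3: y^2 * (1 - 4*x) = 1 + 2*x + 3*x^2 - 4*x^3).
  { assert (4*x^3 - 4*x*y^2 - 3*x^2 + y^2 - 2*x - 1 = 0).
    { destruct (Rmult_integral _ _ E2); [lra|auto]. }
    lra. }
  split; [|exact E3].
  set (Y := y^2) in *.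
  assert (HY: 0 < Y) by (unfold Y; nra).
  assert (G: gpol x = 0).
  { unfold gpol. set (N := 1 + 2*x + 3*x^2 - 4*x^3) in *.
    assert (E1': Y^2 + Y*(-6*x^2+3*x+1) + (x^4-x^3-x^2-x-1) = 0) by (rewrite <- E1; unfold Y; ring).
    transitivity ((1-4*x)^2*(Y^2 + Y*(-6*x^2+3*x+1) + (x^4-x^3-x^2-x-1))
       - (Y*(1-4*x)-N)*(Y*(1-4*x)+N+(1-4*x)*(-6*x^2+3*x+1))).
    - unfold N; ring.
    - rewrite E1', E3. ring. }
  destruct (Rle_dec x (-0.07639)) as [h|h].
  - pose proof (ga x h). lra.
  - destruct (Rle_dec x (-0.07637)) as [h'|h']; [lra|].
    exfalso. destruct (Rle_dec x 0) as [h0|h0].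
    + pose proof (gb1 x ltac:(lra) h0). lra.
    + destruct (Rle_dec x (1/4)) as [h1|h1].
      * pose proof (gb2 x ltac:(lra) h1). lra.
      * destruct (Rle_dec x 1.25) as [h2|h2].
        -- pose proof (Npos x ltac:(lra) h2). nra.
        -- pose proof (gc x ltac:(lra)). lra.
Qed.

Lemma enc_all (b2 x y : R) : PR b2 = 0 -> b2 < 0 -> PC (x,y) = RtoC 0 -> 0 < y -> Enc b2 x y.
Proof.
  intros H1 H2 H3 H4. pose proof (b2_enc b2 H1 H2) as Hb.
  destruct (x_enc x y H3 H4) as [Hx E].
  assert (Hx2: 0.0058323 <= x^2 <= 0.0058355) by (clear - Hx; split; nra).
  assert (Hx3: -0.00044577 <= x^3 <= -0.00044541) by (clear - Hx Hx2; replace (x^3) with (x*x^2) by ring; split; nra).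
  assert (HN: 0.866495 <= 1 + 2*x + 3*x^2 - 4*x^3 <= 0.86655) by lra.
  assert (HY: 0.66369 <= y^2 <= 0.66378).
  { split; apply Rnot_lt_le; intro C.
    - assert (y^2 * (1-4*x) < 0.66369 * (1-4*x)) by (apply Rmult_lt_compat_r; lra). lra.
    - assert (0.66378 * (1-4*x) < y^2 * (1-4*x)) by (apply Rmult_lt_compat_r; lra). lra. }
  assert (Hy: 0.81467 <= y <= 0.81473) by (clear - HY H4; split; nra).
  unfold Enc. repeat split; nra.
Qed.

Open Scope Z_scope.

Definition reachL : list Z4 := [(-7,-6,-1,3); (-6,-6,-1,3); (-6,-6,1,2); (-6,-4,0,2); (-6,-3,1,1); (-6,-2,1,1); (-5,-7,3,1); (-5,-6,-3,4); (-5,-5,-2,3); (-5,-5,0,2); (-5,-5,2,1); (-5,-3,-1,2); (-5,-3,1,1); (-5,-1,2,0); (-4,-7,3,1); (-4,-6,2,1); (-4,-6,4,0); (-4,-5,-4,4); (-4,-5,-2,3); (-4,-5,0,2); (-4,-5,2,1); (-4,-4,1,1); (-4,-4,3,0); (-4,-3,-1,2); (-4,-2,0,1); (-4,-2,2,0); (-4,-2,4,-1); (-4,0,1,0); (-4,0,3,-1); (-4,2,2,-1); (-4,4,3,-2); (-3,-6,-4,4); (-3,-6,-2,3); (-3,-6,0,2); (-3,-6,2,1); (-3,-6,4,0); (-3,-4,-3,3); (-3,-4,-1,2); (-3,-4,1,1); (-3,-4,3,0); (-3,-4,5,-1); (-3,-2,-2,2); (-3,-2,0,1); (-3,-2,2,0);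 (-3,-2,4,-1); (-3,-1,3,-1); (-3,-1,5,-2); (-3,0,-1,1); (-3,0,1,0); (-3,0,3,-1); (-3,1,0,0); (-3,1,2,-1); (-3,1,4,-2); (-3,3,1,-1); (-3,3,3,-2); (-3,5,4,-3); (-2,-7,2,1); (-2,-6,-4,4); (-2,-6,-2,3); (-2,-6,0,2); (-2,-6,2,1); (-2,-5,-1,2); (-2,-5,1,1); (-2,-5,3,0); (-2,-4,-5,4); (-2,-4,-3,3); (-2,-4,-1,2); (-2,-3,-2,2); (-2,-3,0,1); (-2,-3,2,0); (-2,-3,4,-1); (-2,-2,-4,3); (-2,-2,-2,2); (-2,-1,-3,2); (-2,-1,-1,1); (-2,-1,1,0); (-2,-1,3,-1); (-2,-1,5,-2); (-2,1,-2,1); (-2,1,0,0); (-2,1,2,-1); (-2,1,4,-2); (-2,1,6,-3); (-2,2,5,-3); (-2,3,1,-1); (-2,3,3,-2); (-2,3,5,-3); (-2,4,4,-3); (-2,5,2,-2); (-2,5,4,-3); (-2,6,3,-3); (-2,6,5,-4); (-1,-5,-7,5); (-1,-5,-5,4); (-1,-5,-3,3); (-1,-5,-1,2); (-1,-5,1,1); (-1,-3,-6,4); (-1,-3,-4,3); (-1,-3,-2,2); (-1,-3,0,1); (-1,-3,2,0); (-1,-3,4,-1); (-1,-2,3,-1); (-1,-1,-3,2); (-1,-1,-1,1); (-1,-1,1,0); (-1,-1,3,-1); (-1,0,0,0); (-1,0,2,-1); (-1,0,4,-2); (-1,0,6,-3); (-1,1,-2,1); (-1,1,0,0); (-1,2,-1,0);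 (-1,2,1,-1); (-1,2,3,-2); (-1,2,5,-3); (-1,2,7,-4); (-1,3,-1,0); (-1,4,0,-1); (-1,4,2,-2); (-1,4,4,-3); (-1,4,6,-4); (-1,6,1,-2); (-1,6,3,-3); (-1,6,5,-4); (0,-6,-1,2); (0,-5,-7,5); (0,-5,-5,4); (0,-5,-3,3); (0,-5,-1,2); (0,-4,-2,2); (0,-4,0,1); (0,-4,2,0); (0,-3,-6,4); (0,-3,-4,3); (0,-2,-5,3); (0,-2,-3,2); (0,-2,-1,1); (0,-2,1,0); (0,-2,3,-1); (0,-1,-5,3); (0,0,-4,2); (0,0,-2,1); (0,0,0,0); (0,0,2,-1); (0,0,4,-2); (0,1,5,-3); (0,2,-3,1); (0,2,-1,0); (0,2,1,-1); (0,2,3,-2); (0,2,5,-3); (0,3,4,-3); (0,3,6,-4); (0,4,-2,0); (0,4,0,-1); (0,4,2,-2); (0,5,1,-2); (0,5,3,-3); (0,5,5,-4); (0,5,7,-5); (0,6,1,-2); (1,-6,-5,4); (1,-6,-3,3); (1,-6,-1,2); (1,-4,-6,4); (1,-4,-4,3); (1,-4,-2,2); (1,-4,0,1); (1,-3,1,0); (1,-2,-7,4); (1,-2,-5,3); (1,-2,-3,2); (1,-2,-1,1); (1,-2,1,0); (1,-1,0,0); (1,-1,2,-1); (1,0,-6,3); (1,0,-4,2); (1,0,-2,1); (1,0,0,0); (1,1,-3,1); (1,1,-1,0); (1,1,1,-1); (1,1,3,-2); (1,2,-3,1); (1,3,-4,1); (1,3,-2,0); (1,3,0,-1); (1,3,2,-2);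 (1,3,4,-3); (1,3,6,-4); (1,5,-1,-1); (1,5,1,-2); (1,5,3,-3); (1,5,5,-4); (1,5,7,-5); (2,-6,-5,4); (2,-6,-3,3); (2,-5,-4,3); (2,-5,-2,2); (2,-4,-4,3); (2,-3,-5,3); (2,-3,-3,2); (2,-3,-1,1); (2,-2,-5,3); (2,-1,-6,3); (2,-1,-4,2); (2,-1,-2,1); (2,-1,0,0); (2,-1,2,-1); (2,1,-5,2); (2,1,-3,1); (2,1,-1,0); (2,1,1,-1); (2,1,3,-2); (2,2,2,-2); (2,2,4,-3); (2,3,-4,1); (2,3,-2,0); (2,3,0,-1); (2,3,2,-2); (2,4,1,-2); (2,4,3,-3); (2,4,5,-4); (2,5,-3,0); (2,5,-1,-1); (2,5,1,-2); (2,6,-2,-1); (2,6,0,-2); (2,6,2,-3); (2,6,4,-4); (2,7,-2,-1); (3,-5,-4,3); (3,-3,-3,2); (3,-3,-1,1); (3,-1,-4,2); (3,-1,-2,1); (3,-1,0,0); (3,0,-3,1); (3,0,-1,0); (3,0,1,-1); (3,1,-5,2); (3,1,-3,1); (3,2,-4,1); (3,2,-2,0); (3,2,0,-1); (3,2,2,-2); (3,4,-5,1); (3,4,-3,0); (3,4,-1,-1); (3,4,1,-2); (3,4,3,-3); (3,6,-4,0); (3,6,-2,-1); (3,6,0,-2); (3,6,2,-3); (3,6,4,-4); (4,-4,-3,2); (4,-2,-2,1); (4,0,-3,1); (4,0,-1,0); (4,2,-4,1); (4,2,-2,0); (4,2,0,-1); (4,3,1,-2); (4,4,-3,0); (4,4,-1,-1);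 (4,5,-2,-1); (4,5,0,-2); (4,5,2,-3); (4,5,4,-4); (4,6,-4,0); (4,6,-2,-1); (4,7,-3,-1); (5,1,-2,0); (5,3,-1,-1); (5,3,1,-2); (5,5,-2,-1); (5,5,0,-2); (5,5,2,-3); (5,6,3,-4); (5,7,-3,-1); (6,2,-1,-1); (6,3,-1,-1); (6,4,0,-2); (6,6,-1,-2); (6,6,1,-3); (7,6,1,-3)].
Definition aliveL : list Z4 := [(-2,-3,0,1); (-2,-1,-1,1); (-2,-1,1,0); (-2,1,-2,1); (-2,1,0,0); (-2,1,2,-1); (-1,-3,0,1); (-1,-1,-1,1); (-1,-1,1,0); (-1,0,0,0); (-1,0,2,-1); (-1,1,-2,1); (-1,1,0,0); (-1,2,-1,0); (-1,2,1,-1); (0,-2,-1,1); (0,-2,1,0); (0,0,-2,1); (0,0,0,0); (0,0,2,-1); (0,2,-1,0); (0,2,1,-1); (1,-2,-1,1); (1,-2,1,0); (1,-1,0,0); (1,-1,2,-1); (1,0,-2,1); (1,0,0,0); (1,1,-1,0); (1,1,1,-1); (1,3,0,-1); (2,-1,-2,1); (2,-1,0,0); (2,-1,2,-1); (2,1,-1,0); (2,1,1,-1); (2,3,0,-1)].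
Definition badL : list Z4 := [(-9,-8,-3,5); (-9,-8,-1,4); (-9,-8,1,3); (-9,-6,0,3); (-8,-7,-2,4); (-8,-7,0,3); (-8,-7,2,2); (-8,-5,-1,3); (-8,-5,1,2); (-8,-3,0,2); (-7,-7,-4,5); (-7,-7,-2,4); (-7,-7,0,3); (-7,-6,1,2); (-7,-6,3,1); (-7,-5,-3,4); (-7,-4,0,2); (-7,-4,2,1); (-7,-2,1,1); (-6,-8,0,3); (-6,-8,2,2); (-6,-8,4,1); (-6,-6,-3,4); (-6,-6,3,1); (-6,-5,2,1); (-6,-5,4,0); (-6,-4,-2,3); (-6,-4,2,1); (-6,-3,3,0); (-6,-2,-1,2); (-6,-1,2,0); (-6,3,2,-1); (-5,-8,-8,7); (-5,-8,-6,6); (-5,-8,-4,5); (-5,-8,-2,4); (-5,-8,0,3); (-5,-7,1,2); (-5,-7,5,0); (-5,-6,-5,5); (-5,-5,4,0); (-5,-4,-4,4); (-5,-3,3,0); (-5,-3,5,-1); (-5,-1,-2,2); (-5,-1,0,1); (-5,-1,4,-1); (-5,0,3,-1); (-5,1,-1,1); (-5,1,1,0); (-5,1,3,-1); (-5,3,2,-1); (-5,4,3,-2); (-4,-9,0,3); (-4,-9,2,2); (-4,-8,-8,7); (-4,-7,-7,6); (-4,-7,-5,5); (-4,-7,-3,4); (-4,-7,-1,3); (-4,-7,1,2); (-4,-6,6,-1); (-4,-4,5,-1); (-4,-3,-5,4); (-4,-3,-3,3); (-4,-2,6,-2); (-4,-1,-4,3); (-4,-1,-2,2); (-4,0,-1,1);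 (-4,0,5,-2); (-4,2,0,0); (-4,2,4,-2); (-4,4,1,-1); (-4,5,4,-3); (-4,6,2,-2); (-4,6,4,-3); (-3,-9,-4,5); (-3,-9,-2,4); (-3,-8,1,2); (-3,-8,3,1); (-3,-7,-9,7); (-3,-7,-7,6); (-3,-7,-5,5); (-3,-7,-3,4); (-3,-6,-6,5); (-3,-5,-8,6); (-3,-5,-6,5); (-3,-5,7,-2); (-3,-3,6,-2); (-3,-2,-4,3); (-3,-1,7,-3); (-3,0,-3,2); (-3,1,6,-3); (-3,2,-2,1); (-3,2,0,0); (-3,3,5,-3); (-3,4,-1,0); (-3,5,2,-2); (-3,7,3,-3); (-3,7,5,-4); (-2,-8,-3,4); (-2,-8,-1,3); (-2,-8,1,2); (-2,-7,-11,8); (-2,-7,4,0); (-2,-6,-8,6); (-2,-6,-6,5); (-2,-5,5,-1); (-2,-4,-7,5); (-2,-3,6,-2); (-2,-2,-6,4); (-2,-1,7,-3); (-2,0,-5,3); (-2,0,8,-4); (-2,1,8,-4); (-2,2,7,-4); (-2,3,-1,0); (-2,4,6,-4); (-2,5,0,-1); (-2,7,1,-2); (-2,8,4,-4); (-2,8,6,-5); (-1,-8,-9,7); (-1,-8,-7,6); (-1,-8,-5,5); (-1,-7,-2,3); (-1,-7,0,2); (-1,-7,2,1); (-1,-6,-10,7); (-1,-6,-8,6); (-1,-6,-6,5); (-1,-5,3,0); (-1,-4,-9,6); (-1,-4,4,-1); (-1,-4,6,-2); (-1,-2,5,-2); (-1,-2,7,-3); (-1,-1,-5,3); (-1,0,8,-4);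 (-1,1,-6,3); (-1,1,-4,2); (-1,2,9,-5); (-1,3,-3,1); (-1,4,8,-5); (-1,6,7,-5); (-1,7,6,-5); (-1,8,2,-3); (-1,9,5,-5); (-1,9,7,-6); (0,-9,-3,4); (0,-7,-8,6); (0,-7,-6,5); (0,-7,-4,4); (0,-7,-2,3); (0,-6,1,1); (0,-6,3,0); (0,-5,-9,6); (0,-4,4,-1); (0,-3,-10,6); (0,-3,-8,5); (0,-2,5,-2); (0,-1,-9,5); (0,-1,-7,4); (0,1,7,-4); (0,1,9,-5); (0,2,-5,2); (0,3,8,-5); (0,3,10,-6); (0,4,-4,1); (0,5,9,-6); (0,6,-3,0); (0,6,-1,-1); (0,7,2,-3); (0,7,4,-4); (0,7,6,-5); (0,7,8,-6); (0,9,3,-4); (1,-9,-7,6); (1,-9,-5,5); (1,-8,-2,3); (1,-7,-6,5); (1,-6,-7,5); (1,-4,-8,5); (1,-3,3,-1); (1,-2,-9,5); (1,-1,4,-2); (1,-1,6,-3); (1,0,-8,4); (1,1,5,-3); (1,2,-7,3); (1,2,-5,2); (1,4,-6,2); (1,4,-4,1); (1,4,9,-6); (1,5,-3,0); (1,6,6,-5); (1,6,8,-6); (1,6,10,-7); (1,7,-2,-1); (1,7,0,-2); (1,7,2,-3); (1,8,5,-5); (1,8,7,-6); (1,8,9,-7); (2,-8,-6,5); (2,-8,-4,4); (2,-7,-1,2); (2,-5,0,1); (2,-4,-6,4); (2,-3,1,0); (2,-2,-7,4); (2,-1,-8,4); (2,0,-8,4); (2,0,5,-3); (2,1,-7,3);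 (2,2,6,-4); (2,3,-6,2); (2,4,7,-5); (2,5,-5,1); (2,6,6,-5); (2,6,8,-6); (2,7,-4,0); (2,7,11,-8); (2,8,-1,-2); (2,8,1,-3); (2,8,3,-4); (3,-7,-5,4); (3,-7,-3,3); (3,-5,-2,2); (3,-4,1,0); (3,-3,-5,3); (3,-2,0,0); (3,-2,2,-1); (3,-1,-6,3); (3,0,3,-2); (3,1,-7,3); (3,2,4,-3); (3,3,-6,2); (3,5,-7,2); (3,5,6,-5); (3,5,8,-6); (3,6,6,-5); (3,7,3,-4); (3,7,5,-5); (3,7,7,-6); (3,7,9,-7); (3,8,-3,-1); (3,8,-1,-2); (3,9,2,-4); (3,9,4,-5); (4,-6,-4,3); (4,-6,-2,2); (4,-5,-4,3); (4,-4,-1,1); (4,-2,-4,2); (4,-2,0,0); (4,0,-5,2); (4,0,1,-1); (4,1,2,-2); (4,1,4,-3); (4,2,-6,2); (4,3,3,-3); (4,3,5,-4); (4,4,-5,1); (4,6,-6,1); (4,7,-1,-2); (4,7,1,-3); (4,7,3,-4); (4,7,5,-5); (4,7,7,-6); (4,8,8,-7); (4,9,-2,-2); (4,9,0,-3); (5,-4,-3,2); (5,-3,-2,1); (5,-1,-3,1); (5,-1,-1,0); (5,-1,1,-1); (5,0,-3,1); (5,1,-4,1); (5,1,0,-1); (5,1,2,-2); (5,3,-5,1); (5,3,-3,0); (5,4,4,-4); (5,5,-4,0); (5,6,5,-5); (5,7,-5,0); (5,7,-1,-2); (5,8,0,-3); (5,8,2,-4); (5,8,4,-5); (5,8,6,-6);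 (5,8,8,-7); (6,-3,-2,1); (6,1,-2,0); (6,2,1,-2); (6,3,-3,0); (6,4,-2,-1); (6,4,2,-3); (6,5,-4,0); (6,5,-2,-1); (6,6,-3,-1); (6,6,3,-4); (6,8,-4,-1); (6,8,-2,-2); (6,8,0,-3); (7,2,-1,-1); (7,4,-2,-1); (7,4,0,-2); (7,5,3,-4); (7,6,-3,-1); (7,6,-1,-2); (7,7,0,-3); (7,7,2,-4); (7,7,4,-5); (8,3,0,-2); (8,5,-1,-2); (8,5,1,-3); (8,7,-2,-2); (8,7,0,-3); (8,7,2,-4); (9,6,0,-3); (9,8,-1,-3); (9,8,1,-4); (9,8,3,-5)].
Definition rankL : list (Z4*nat) := [((-7,-6,-1,3)%Z,1%nat); ((-6,-6,-1,3)%Z,1%nat); ((-6,-6,1,2)%Z,1%nat); ((-6,-4,0,2)%Z,2%nat); ((-6,-3,1,1)%Z,1%nat); ((-6,-2,1,1)%Z,1%nat); ((-5,-7,3,1)%Z,1%nat); ((-5,-6,-3,4)%Z,1%nat); ((-5,-5,-2,3)%Z,2%nat); ((-5,-5,0,2)%Z,3%nat); ((-5,-5,2,1)%Z,2%nat); ((-5,-3,-1,2)%Z,3%nat); ((-5,-3,1,1)%Z,2%nat); ((-5,-1,2,0)%Z,2%nat); ((-4,-7,3,1)%Z,1%nat); ((-4,-6,2,1)%Z,2%nat); ((-4,-6,4,0)%Z,1%nat); ((-4,-5,-4,4)%Z,1%nat); ((-4,-5,-2,3)%Z,3%nat); ((-4,-5,0,2)%Z,4%nat); ((-4,-5,2,1)%Z,2%nat);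 ((-4,-4,1,1)%Z,4%nat); ((-4,-4,3,0)%Z,2%nat); ((-4,-3,-1,2)%Z,5%nat); ((-4,-2,0,1)%Z,5%nat); ((-4,-2,2,0)%Z,3%nat); ((-4,-2,4,-1)%Z,1%nat); ((-4,0,1,0)%Z,3%nat); ((-4,0,3,-1)%Z,2%nat); ((-4,2,2,-1)%Z,3%nat); ((-4,4,3,-2)%Z,2%nat); ((-3,-6,-4,4)%Z,1%nat); ((-3,-6,-2,3)%Z,1%nat); ((-3,-6,0,2)%Z,1%nat); ((-3,-6,2,1)%Z,3%nat); ((-3,-6,4,0)%Z,1%nat); ((-3,-4,-3,3)%Z,2%nat); ((-3,-4,-1,2)%Z,7%nat); ((-3,-4,1,1)%Z,6%nat); ((-3,-4,3,0)%Z,3%nat); ((-3,-4,5,-1)%Z,1%nat); ((-3,-2,-2,2)%Z,7%nat); ((-3,-2,0,1)%Z,9%nat); ((-3,-2,2,0)%Z,6%nat); ((-3,-2,4,-1)%Z,2%nat); ((-3,-1,3,-1)%Z,4%nat); ((-3,-1,5,-2)%Z,1%nat); ((-3,0,-1,1)%Z,7%nat); ((-3,0,1,0)%Z,12%nat); ((-3,0,3,-1)%Z,6%nat); ((-3,1,0,0)%Z,8%nat); ((-3,1,2,-1)%Z,8%nat); ((-3,1,4,-2)%Z,2%nat); ((-3,3,1,-1)%Z,4%nat); ((-3,3,3,-2)%Z,4%nat); ((-3,5,4,-3)%Z,1%nat); ((-2,-7,2,1)%Z,1%nat); ((-2,-6,-4,4)%Z,1%nat); ((-2,-6,-2,3)%Z,1%nat);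 ((-2,-6,0,2)%Z,1%nat); ((-2,-6,2,1)%Z,3%nat); ((-2,-5,-1,2)%Z,5%nat); ((-2,-5,1,1)%Z,5%nat); ((-2,-5,3,0)%Z,2%nat); ((-2,-4,-5,4)%Z,2%nat); ((-2,-4,-3,3)%Z,3%nat); ((-2,-4,-1,2)%Z,7%nat); ((-2,-3,-2,2)%Z,11%nat); ((-2,-3,2,0)%Z,7%nat); ((-2,-3,4,-1)%Z,2%nat); ((-2,-2,-4,3)%Z,3%nat); ((-2,-2,-2,2)%Z,11%nat); ((-2,-1,-3,2)%Z,6%nat); ((-2,-1,3,-1)%Z,10%nat); ((-2,-1,5,-2)%Z,1%nat); ((-2,1,4,-2)%Z,6%nat); ((-2,1,6,-3)%Z,2%nat); ((-2,2,5,-3)%Z,4%nat); ((-2,3,1,-1)%Z,6%nat); ((-2,3,3,-2)%Z,5%nat); ((-2,3,5,-3)%Z,3%nat); ((-2,4,4,-3)%Z,3%nat); ((-2,5,2,-2)%Z,2%nat); ((-2,5,4,-3)%Z,1%nat); ((-2,6,3,-3)%Z,1%nat); ((-2,6,5,-4)%Z,1%nat); ((-1,-5,-7,5)%Z,1%nat); ((-1,-5,-5,4)%Z,1%nat); ((-1,-5,-3,3)%Z,2%nat); ((-1,-5,-1,2)%Z,3%nat); ((-1,-5,1,1)%Z,5%nat); ((-1,-3,-6,4)%Z,2%nat); ((-1,-3,-4,3)%Z,4%nat); ((-1,-3,-2,2)%Z,11%nat); ((-1,-3,2,0)%Z,7%nat); ((-1,-3,4,-1)%Z,2%nat); ((-1,-2,3,-1)%Z,5%nat);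 ((-1,-1,-3,2)%Z,8%nat); ((-1,-1,3,-1)%Z,10%nat); ((-1,0,4,-2)%Z,6%nat); ((-1,0,6,-3)%Z,1%nat); ((-1,2,3,-2)%Z,8%nat); ((-1,2,5,-3)%Z,4%nat); ((-1,2,7,-4)%Z,1%nat); ((-1,3,-1,0)%Z,9%nat); ((-1,4,0,-1)%Z,4%nat); ((-1,4,2,-2)%Z,4%nat); ((-1,4,4,-3)%Z,3%nat); ((-1,4,6,-4)%Z,2%nat); ((-1,6,1,-2)%Z,1%nat); ((-1,6,3,-3)%Z,1%nat); ((-1,6,5,-4)%Z,1%nat); ((0,-6,-1,2)%Z,1%nat); ((0,-5,-7,5)%Z,1%nat); ((0,-5,-5,4)%Z,1%nat); ((0,-5,-3,3)%Z,2%nat); ((0,-5,-1,2)%Z,3%nat); ((0,-4,-2,2)%Z,5%nat); ((0,-4,0,1)%Z,9%nat); ((0,-4,2,0)%Z,5%nat); ((0,-3,-6,4)%Z,2%nat); ((0,-3,-4,3)%Z,4%nat); ((0,-2,-5,3)%Z,4%nat); ((0,-2,-3,2)%Z,8%nat); ((0,-2,3,-1)%Z,5%nat); ((0,-1,-5,3)%Z,4%nat); ((0,0,-4,2)%Z,6%nat); ((0,0,4,-2)%Z,6%nat); ((0,1,5,-3)%Z,4%nat); ((0,2,-3,1)%Z,5%nat); ((0,2,3,-2)%Z,8%nat); ((0,2,5,-3)%Z,4%nat); ((0,3,4,-3)%Z,4%nat); ((0,3,6,-4)%Z,2%nat); ((0,4,-2,0)%Z,5%nat); ((0,4,0,-1)%Z,9%nat);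 ((0,4,2,-2)%Z,5%nat); ((0,5,1,-2)%Z,3%nat); ((0,5,3,-3)%Z,2%nat); ((0,5,5,-4)%Z,1%nat); ((0,5,7,-5)%Z,1%nat); ((0,6,1,-2)%Z,1%nat); ((1,-6,-5,4)%Z,1%nat); ((1,-6,-3,3)%Z,1%nat); ((1,-6,-1,2)%Z,1%nat); ((1,-4,-6,4)%Z,2%nat); ((1,-4,-4,3)%Z,3%nat); ((1,-4,-2,2)%Z,4%nat); ((1,-4,0,1)%Z,4%nat); ((1,-3,1,0)%Z,9%nat); ((1,-2,-7,4)%Z,1%nat); ((1,-2,-5,3)%Z,4%nat); ((1,-2,-3,2)%Z,8%nat); ((1,0,-6,3)%Z,1%nat); ((1,0,-4,2)%Z,6%nat); ((1,1,-3,1)%Z,10%nat); ((1,1,3,-2)%Z,8%nat); ((1,2,-3,1)%Z,5%nat); ((1,3,-4,1)%Z,2%nat); ((1,3,-2,0)%Z,7%nat); ((1,3,2,-2)%Z,11%nat); ((1,3,4,-3)%Z,4%nat); ((1,3,6,-4)%Z,2%nat); ((1,5,-1,-1)%Z,5%nat); ((1,5,1,-2)%Z,3%nat); ((1,5,3,-3)%Z,2%nat); ((1,5,5,-4)%Z,1%nat); ((1,5,7,-5)%Z,1%nat); ((2,-6,-5,4)%Z,1%nat); ((2,-6,-3,3)%Z,1%nat); ((2,-5,-4,3)%Z,1%nat); ((2,-5,-2,2)%Z,2%nat); ((2,-4,-4,3)%Z,3%nat); ((2,-3,-5,3)%Z,3%nat); ((2,-3,-3,2)%Z,5%nat); ((2,-3,-1,1)%Z,6%nat);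 ((2,-2,-5,3)%Z,4%nat); ((2,-1,-6,3)%Z,2%nat); ((2,-1,-4,2)%Z,6%nat); ((2,1,-5,2)%Z,1%nat); ((2,1,-3,1)%Z,10%nat); ((2,1,3,-2)%Z,6%nat); ((2,2,2,-2)%Z,11%nat); ((2,2,4,-3)%Z,3%nat); ((2,3,-4,1)%Z,2%nat); ((2,3,-2,0)%Z,7%nat); ((2,3,2,-2)%Z,11%nat); ((2,4,1,-2)%Z,7%nat); ((2,4,3,-3)%Z,3%nat); ((2,4,5,-4)%Z,2%nat); ((2,5,-3,0)%Z,2%nat); ((2,5,-1,-1)%Z,5%nat); ((2,5,1,-2)%Z,5%nat); ((2,6,-2,-1)%Z,3%nat); ((2,6,0,-2)%Z,1%nat); ((2,6,2,-3)%Z,1%nat); ((2,6,4,-4)%Z,1%nat); ((2,7,-2,-1)%Z,1%nat); ((3,-5,-4,3)%Z,1%nat); ((3,-3,-3,2)%Z,4%nat); ((3,-3,-1,1)%Z,4%nat); ((3,-1,-4,2)%Z,2%nat); ((3,-1,-2,1)%Z,8%nat); ((3,-1,0,0)%Z,8%nat); ((3,0,-3,1)%Z,6%nat); ((3,0,-1,0)%Z,12%nat); ((3,0,1,-1)%Z,7%nat); ((3,1,-5,2)%Z,1%nat); ((3,1,-3,1)%Z,4%nat); ((3,2,-4,1)%Z,2%nat); ((3,2,-2,0)%Z,6%nat); ((3,2,0,-1)%Z,9%nat); ((3,2,2,-2)%Z,7%nat); ((3,4,-5,1)%Z,1%nat); ((3,4,-3,0)%Z,3%nat); ((3,4,-1,-1)%Z,6%nat);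 ((3,4,1,-2)%Z,7%nat); ((3,4,3,-3)%Z,2%nat); ((3,6,-4,0)%Z,1%nat); ((3,6,-2,-1)%Z,3%nat); ((3,6,0,-2)%Z,1%nat); ((3,6,2,-3)%Z,1%nat); ((3,6,4,-4)%Z,1%nat); ((4,-4,-3,2)%Z,2%nat); ((4,-2,-2,1)%Z,3%nat); ((4,0,-3,1)%Z,2%nat); ((4,0,-1,0)%Z,3%nat); ((4,2,-4,1)%Z,1%nat); ((4,2,-2,0)%Z,3%nat); ((4,2,0,-1)%Z,5%nat); ((4,3,1,-2)%Z,5%nat); ((4,4,-3,0)%Z,2%nat); ((4,4,-1,-1)%Z,4%nat); ((4,5,-2,-1)%Z,2%nat); ((4,5,0,-2)%Z,4%nat); ((4,5,2,-3)%Z,3%nat); ((4,5,4,-4)%Z,1%nat); ((4,6,-4,0)%Z,1%nat); ((4,6,-2,-1)%Z,2%nat); ((4,7,-3,-1)%Z,1%nat); ((5,1,-2,0)%Z,2%nat); ((5,3,-1,-1)%Z,2%nat); ((5,3,1,-2)%Z,3%nat); ((5,5,-2,-1)%Z,2%nat); ((5,5,0,-2)%Z,3%nat); ((5,5,2,-3)%Z,2%nat); ((5,6,3,-4)%Z,1%nat); ((5,7,-3,-1)%Z,1%nat); ((6,2,-1,-1)%Z,1%nat); ((6,3,-1,-1)%Z,1%nat); ((6,4,0,-2)%Z,2%nat); ((6,6,-1,-2)%Z,1%nat); ((6,6,1,-3)%Z,1%nat); ((7,6,1,-3)%Z,1%nat)].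

Close Scope Z_scope.

Lemma closure_check : forallb (fun a => forallb (fun d => mem reachL (nxt a d) || mem badL (nxt a d)) digs) reachL = true.
Proof. vm_compute. reflexivity. Qed.
Lemma rank_check : forallb (fun p : Z4*nat => let (a,r) := p in forallb (fun d => let w := nxt a d in
   negb (mem reachL w) || match lookup rankL w with Some r' => Nat.ltb r' r | None => false end) digs) rankL = true.
Proof. vm_compute. reflexivity. Qed.
Lemma cover_check : forallb (fun a => mem aliveL a || match lookup rankL a with Some _ => true | None => false end) reachL = true.
Proof. vm_compute. reflexivity. Qed.

Definition vR (t:R) (a:Z4) : R := let '(a0,a1,a2,a3) := a in IZR a0 + IZR a1*t + IZR a2*t^2 + IZR a3*t^3.
Definition reC (x y:R) (a:Z4) : R := let '(a0,a1,a2,a3) := a in IZR a0 + IZR a1*x + IZR a2*(x^2-y^2) + IZR a3*(x^3-3*x*y^2).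
Definition imC (x y:R) (a:Z4) : R := let '(a0,a1,a2,a3) := a in IZR a1*y + IZR a2*(2*x*y) + IZR a3*(3*x^2*y-y^3).
Definition inb (b2 x y : R) (a:Z4) : Prop := Rabs (vR b2 a) <= 40/9 /\ Rabs (reC x y a) <= 20/3 /\ Rabs (imC x y a) <= 20/3.

Ltac viol_tac := intros [h1 [h2 h3]]; unfold vR, reC, imC in h1, h2, h3;
     apply Rabs_le_between in h1; apply Rabs_le_between in h2; apply Rabs_le_between in h3; lra.
Lemma bad_viol b2 x y : Enc b2 x y -> forall a, In a badL -> ~ inb b2 x y a.
Proof. unfold Enc. intros (E1&E2&E3&E4&E5&E6&E7&E8&E9) a Ha. unfold badL in Ha.
  repeat (destruct Ha as [<-|Ha]; [viol_tac|]). destruct Ha. Qed.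


Definition Zd (b:bool) : Z := if b then 1%Z else 0%Z.
Definition dd (eps eps' : Z -> bool) (l:Z) (n:nat) : Z :=
  (Zd (eps' (l + Z.of_nat n)) - (if Z.leb 4 (l + Z.of_nat n) then Zd (eps (l + Z.of_nat n)) else 0))%Z.
Fixpoint st (eps eps' : Z -> bool) (l:Z) (n:nat) : Z4 :=
  match n with O => (0,0,0,0)%Z | S m => nxt (st eps eps' l m) (dd eps eps' l m) end.
Lemma dd_range eps eps' l n : (-1 <= dd eps eps' l n <= 1)%Z.
Proof. unfold dd, Zd. destruct (eps' (l + Z.of_nat n)%Z), (Z.leb 4 (l + Z.of_nat n)), (eps (l + Z.of_nat n)%Z); lia. Qed.
Lemma IZR_Zd b : IZR (Zd b) = digit b.
Proof. destruct b; reflexivity. Qed.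

Fixpoint psR (f : nat -> R) (n:nat) : R := match n with O => 0 | S m => psR f m + f m end.
Fixpoint psC (f : nat -> C) (n:nat) : C := match n with O => RtoC 0 | S m => (psC f m + f m)%C end.

Lemma psR_sum f n : psR f (S n) = sum_n f n.
Proof. induction n. - simpl. rewrite sum_O. ring. - rewrite sum_Sn, <- IHn. reflexivity. Qed.
Lemma psC_sum f n : psC f (S n) = sum_n f n.
Proof. induction n. - simpl. rewrite sum_O. apply Cplus_0_l. - rewrite sum_Sn, <- IHn. reflexivity. Qed.

Lemma series_ev {K : AbsRing} {V : NormedModule K} (a : nat -> V) (s : V) :
  is_series a s -> forall eps, 0 < eps -> exists N0, forall N, (N0 <= N)%nat -> norm (minus (sum_n a N) s) < eps.
Proof.
  intros H eps He.
  assert (Hf := norm_factor_gt_0 (K:=K) (V:=V)).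
  assert (He' : 0 < eps / norm_factor) by (apply Rdiv_lt_0_compat; [exact He | exact Hf]).
  destruct (proj1 (filterlim_locally (sum_n a) s) H (mkposreal _ He')) as [N0 HN].
  exists N0. intros N HN'. specialize (HN N HN').
  apply norm_compat2 in HN. simpl in HN.
  assert (E : norm_factor (K:=K) (V:=V) * (eps / norm_factor (K:=K) (V:=V)) = eps) by (field; lra). rewrite E in HN. exact HN.
Qed.

Lemma conv_R (a b : nat -> R) (s : R) (g : nat -> nat) :
  is_series a s -> is_series b s -> (forall M, exists N0, forall N, (N0 <= N)%nat -> (M <= g N)%nat) ->
  forall eps, 0 < eps -> exists N0, forall N, (N0 <= N)%nat -> Rabs (psR a N - psR b (g N)) < eps.
Proof.
  intros Ha Hb Hg eps He.
  destruct (series_ev a s Ha (eps/2) ltac:(lra)) as [N1 H1].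
  destruct (series_ev b s Hb (eps/2) ltac:(lra)) as [N2 H2].
  destruct (Hg (S N2)) as [N3 H3].
  exists (S N1 + N3)%nat. intros N HN.
  destruct N as [|N]; [lia|]. rewrite psR_sum.
  specialize (H3 (S N) ltac:(lia)). destruct (g (S N)) as [|M] eqn:EM; [lia|]. rewrite psR_sum.
  specialize (H1 N ltac:(lia)). specialize (H2 M ltac:(lia)).
  change (Rabs (sum_n a N - s) < eps/2) in H1.
  change (Rabs (sum_n b M - s) < eps/2) in H2.
  replace (sum_n a N - sum_n b M) with ((sum_n a N - s) + - (sum_n b M - s)) by ring.
  eapply Rle_lt_trans; [apply Rabs_triang|]. rewrite Rabs_Ropp. lra.
Qed.

Lemma conv_C (a b : nat -> C) (s : C) (g : nat -> nat) :
  is_series a s -> is_series b s -> (forall M, exists N0, forall N, (N0 <= N)%nat -> (M <= g N)%nat) ->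
  forall eps, 0 < eps -> exists N0, forall N, (N0 <= N)%nat -> Cmod (psC a N - psC b (g N))%C < eps.
Proof.
  intros Ha Hb Hg eps He.
  destruct (series_ev a s Ha (eps/2) ltac:(lra)) as [N1 H1].
  destruct (series_ev b s Hb (eps/2) ltac:(lra)) as [N2 H2].
  destruct (Hg (S N2)) as [N3 H3].
  exists (S N1 + N3)%nat. intros N HN.
  destruct N as [|N]; [lia|]. rewrite psC_sum.
  specialize (H3 (S N) ltac:(lia)). destruct (g (S N)) as [|M] eqn:EM; [lia|]. rewrite psC_sum.
  specialize (H1 N ltac:(lia)). specialize (H2 M ltac:(lia)).
  change (Cmod (sum_n a N - s)%C < eps/2) in H1.
  change (Cmod (sum_n b M - s)%C < eps/2) in H2.
  replace (sum_n a N - sum_n b M)%C with ((sum_n a N - s) + - (sum_n b M - s))%C by ring.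
  eapply Rle_lt_trans; [apply Cmod_triangle|]. rewrite Cmod_opp. lra.
Qed.


Definition vC (z:C) (a:Z4) : C := let '(a0,a1,a2,a3) := a in
  (RtoC (IZR a0) + RtoC (IZR a1)*z + RtoC (IZR a2)*z^2 + RtoC (IZR a3)*z^3)%C.

Lemma vR_nxt t a d : PR t = 0 -> t * vR t (nxt a d) = vR t a + IZR d.
Proof. intros H. destruct a as [[[a0 a1] a2] a3]. simpl.
  rewrite !minus_IZR, plus_IZR.
  transitivity (IZR a0 + IZR a1 * t + IZR a2 * t ^ 2 + IZR a3 * t ^ 3 + IZR d + (IZR a0 + IZR d) * PR t).
  - unfold PR; ring.
  - rewrite H; ring. Qed.

Lemma vC_nxt z a d : PC z = RtoC 0 -> (z * vC z (nxt a d) = vC z a + RtoC (IZR d))%C.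
Proof. intros H. destruct a as [[[a0 a1] a2] a3]. simpl.
  rewrite !minus_IZR, plus_IZR, !RtoC_minus, !RtoC_plus.
  transitivity (RtoC (IZR a0) + RtoC (IZR a1) * z + RtoC (IZR a2) * z ^ 2 + RtoC (IZR a3) * z ^ 3 + RtoC (IZR d) + (RtoC (IZR a0) + RtoC (IZR d)) * PC z)%C.
  - unfold PC. ring.
  - rewrite H; ring. Qed.

Lemma vC_parts x y a : vC (x,y) a = (reC x y a, imC x y a).
Proof. destruct a as [[[a0 a1] a2] a3]. unfold vC, reC, imC. simpl.
  apply injective_projections; simpl; ring. Qed.

Lemma Cpowz_alt z k : Cpowz z k = if Z.leb 0 k then (z ^ Z.to_nat k)%C else Cinv (z ^ Z.to_nat (- k))%C.
Proof. destruct k; reflexivity. Qed.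
Lemma Cpow_S_r z n : (z ^ S n = z ^ n * z)%C.
Proof. induction n; simpl. - ring. - simpl in IHn. rewrite IHn. ring. Qed.
Lemma Cpow_nz z n : z <> RtoC 0 -> (z ^ n)%C <> RtoC 0.
Proof. intros Hz. apply Cmod_gt_0. rewrite Cmod_pow. apply pow_lt. apply Cmod_gt_0. exact Hz. Qed.
Lemma Cpowz_succ z k : z <> RtoC 0 -> Cpowz z (k + 1) = (Cpowz z k * z)%C.
Proof. intros Hz. rewrite !Cpowz_alt.
  destruct (Z.leb_spec 0 k) as [Hk|Hk].
  - destruct (Z.leb_spec 0 (k+1)); [|lia].
    replace (Z.to_nat (k+1)) with (S (Z.to_nat k)) by lia. apply Cpow_S_r.
  - destruct (Z.leb_spec 0 (k+1)) as [Hk1|Hk1].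
    + assert (k = -1)%Z by lia. subst. simpl. field. intro E. apply Hz.
      rewrite <- E. ring.
    + replace (Z.to_nat (-k)) with (S (Z.to_nat (-(k+1)))) by lia.
      rewrite Cpow_S_r. field. split; auto. apply Cpow_nz; auto. Qed.
Lemma Cpowz_add_nat z k i : z <> RtoC 0 -> Cpowz z (k + Z.of_nat i) = (Cpowz z k * z ^ i)%C.
Proof. intros Hz. induction i.
  - simpl. rewrite Z.add_0_r. ring.
  - rewrite Nat2Z.inj_succ, <- Z.add_1_r, Z.add_assoc, Cpowz_succ, IHi by auto.
    rewrite Cpow_S_r. ring. Qed.
Lemma powerRZ_add_nat t k i : t <> 0 -> powerRZ t (k + Z.of_nat i) = powerRZ t k * t ^ i.
Proof. intros Ht. rewrite powerRZ_add by auto. rewrite pow_powerRZ. reflexivity. Qed.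


Lemma IZR_D_abs (z : Z) : (-1 <= z <= 1)%Z -> Rabs (IZR z) <= 1.
Proof. intros [h1 h2]. apply IZR_le in h1. apply IZR_le in h2. apply Rabs_le_between. lra. Qed.

Lemma tailR (t r : R) (l : Z) (D : nat -> Z) (v : nat -> R) :
  t <> 0 -> Rabs t <= r -> r < 1 ->
  (forall n, (-1 <= D n <= 1)%Z) ->
  (forall N, psR (fun n => IZR (D n) * powerRZ t (l + Z.of_nat n)) N = powerRZ t (l + Z.of_nat N) * v N) ->
  (forall eps, 0 < eps -> exists N0, forall N, (N0 <= N)%nat -> Rabs (psR (fun n => IZR (D n) * powerRZ t (l + Z.of_nat n)) N) < eps) ->
  forall K, Rabs (v K) <= 1/(1-r).
Proof.
  intros Ht Hr Hr1 HD Hid Hconv K.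
  set (f := fun n => IZR (D n) * powerRZ t (l + Z.of_nat n)) in *.
  assert (Hc: 0 < Rabs (powerRZ t (l + Z.of_nat K))) by (apply Rabs_pos_lt; apply powerRZ_NOR; auto).
  set (c := powerRZ t (l + Z.of_nat K)) in *.
  assert (Hr0: 0 <= r) by (pose proof (Rabs_pos t); lra).
  assert (Hj: forall j, Rabs (psR f (K + j) - psR f K) <= Rabs c * (1 - r^j) / (1 - r)).
  { induction j.
    - rewrite Nat.add_0_r. replace (psR f K - psR f K) with 0 by ring. rewrite Rabs_R0.
      replace (Rabs c * (1 - r ^ 0) / (1 - r)) with 0 by (simpl; field; lra). lra.
    - replace (K + S j)%nat with (S (K+j)) by lia. cbn [psR].
      assert (Hf: Rabs (f (K+j)%nat) <= Rabs c * r^j).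
      { unfold f. rewrite Nat2Z.inj_add, Z.add_assoc, powerRZ_add_nat by auto. fold c.
        rewrite !Rabs_mult, <- RPow_abs.
        assert (Rabs (IZR (D (K+j)%nat)) <= 1) by (apply IZR_D_abs; auto).
        assert (Rabs t ^ j <= r ^ j) by (apply pow_incr; split; [apply Rabs_pos| auto]).
        pose proof (Rabs_pos (IZR (D (K+j)%nat))). pose proof (pow_le (Rabs t) j (Rabs_pos t)).
        pose proof (Rabs_pos c).
        apply Rle_trans with (1 * (Rabs c * Rabs t ^ j)).
        { apply Rmult_le_compat_r; [apply Rmult_le_pos; auto| auto]. }
        rewrite Rmult_1_l. apply Rmult_le_compat_l; auto. }
      replace (psR f (K + j) + f (K + j)%nat - psR f K) with ((psR f (K+j) - psR f K) + f (K+j)%nat) by ring.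
      eapply Rle_trans; [apply Rabs_triang|].
      replace (Rabs c * (1 - r ^ S j) / (1 - r)) with (Rabs c * (1 - r^j)/(1-r) + Rabs c * r^j) by (simpl; field; lra).
      lra. }
  apply Rmult_le_reg_l with (Rabs c); [exact Hc|].
  rewrite <- Rabs_mult. unfold c. rewrite <- Hid.
  apply Rle_plus_epsilon. intros e He.
  destruct (Hconv e He) as [N0 HN].
  specialize (HN (K + N0)%nat ltac:(lia)). specialize (Hj N0).
  assert (Hrj: 0 <= r^N0) by (apply pow_le; auto).
  assert (Rabs c * (1 - r ^ N0) / (1 - r) <= Rabs c * (1/(1-r))).
  { unfold Rdiv. rewrite Rmult_assoc. apply Rmult_le_compat_l; [lra|].
    rewrite Rmult_1_l. assert (hi: 0 < /(1-r)) by (apply Rinv_0_lt_compat; lra). nra. }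
  replace (psR f K) with (psR f (K+N0) + - (psR f (K+N0) - psR f K)) by ring.
  eapply Rle_trans; [apply Rabs_triang|]. rewrite Rabs_Ropp. fold c. lra.
Qed.

Lemma Cpowz_nz z k : z <> RtoC 0 -> Cpowz z k <> RtoC 0.
Proof. intros Hz. rewrite Cpowz_alt. destruct (Z.leb 0 k).
  - apply Cpow_nz; auto.
  - apply Cmod_gt_0. rewrite Cmod_inv by (apply Cpow_nz; auto). apply Rinv_0_lt_compat.
    apply Cmod_gt_0. apply Cpow_nz; auto. Qed.

Lemma tailC (t : C) (r : R) (l : Z) (D : nat -> Z) (v : nat -> C) :
  t <> RtoC 0 -> Cmod t <= r -> r < 1 ->
  (forall n, (-1 <= D n <= 1)%Z) ->
  (forall N, psC (fun n => RtoC (IZR (D n)) * Cpowz t (l + Z.of_nat n))%C N = (Cpowz t (l + Z.of_nat N) * v N)%C) ->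
  (forall eps, 0 < eps -> exists N0, forall N, (N0 <= N)%nat -> Cmod (psC (fun n => RtoC (IZR (D n)) * Cpowz t (l + Z.of_nat n))%C N) < eps) ->
  forall K, Cmod (v K) <= 1/(1-r).
Proof.
  intros Ht Hr Hr1 HD Hid Hconv K.
  set (f := fun n => (RtoC (IZR (D n)) * Cpowz t (l + Z.of_nat n))%C) in *.
  assert (Hc: 0 < Cmod (Cpowz t (l + Z.of_nat K))) by (apply Cmod_gt_0; apply Cpowz_nz; auto).
  set (c := Cpowz t (l + Z.of_nat K)) in *.
  assert (Hr0: 0 <= r) by (pose proof (Cmod_ge_0 t); lra).
  assert (Hj: forall j, Cmod (psC f (K + j) - psC f K)%C <= Cmod c * (1 - r^j) / (1 - r)).
  { induction j.
    - rewrite Nat.add_0_r. replace (psC f K - psC f K)%C with (RtoC 0) by ring. rewrite Cmod_0.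
      replace (Cmod c * (1 - r ^ 0) / (1 - r)) with 0 by (simpl; field; lra). lra.
    - replace (K + S j)%nat with (S (K+j)) by lia. cbn [psC].
      assert (Hf: Cmod (f (K+j)%nat) <= Cmod c * r^j).
      { unfold f. rewrite Nat2Z.inj_add, Z.add_assoc, Cpowz_add_nat by auto. fold c.
        rewrite !Cmod_mult, Cmod_pow, Cmod_R.
        assert (Rabs (IZR (D (K+j)%nat)) <= 1) by (apply IZR_D_abs; auto).
        assert (Cmod t ^ j <= r ^ j) by (apply pow_incr; split; [apply Cmod_ge_0| auto]).
        pose proof (Rabs_pos (IZR (D (K+j)%nat))). pose proof (pow_le (Cmod t) j (Cmod_ge_0 t)).
        pose proof (Cmod_ge_0 c).
        apply Rle_trans with (1 * (Cmod c * Cmod t ^ j)).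
        { apply Rmult_le_compat_r; [apply Rmult_le_pos; auto| auto]. }
        rewrite Rmult_1_l. apply Rmult_le_compat_l; auto. }
      replace (psC f (K + j) + f (K + j)%nat - psC f K)%C with ((psC f (K+j) - psC f K) + f (K+j)%nat)%C by ring.
      eapply Rle_trans; [apply Cmod_triangle|].
      replace (Cmod c * (1 - r ^ S j) / (1 - r)) with (Cmod c * (1 - r^j)/(1-r) + Cmod c * r^j) by (simpl; field; lra).
      lra. }
  apply Rmult_le_reg_l with (Cmod c); [exact Hc|].
  rewrite <- Cmod_mult. unfold c. rewrite <- Hid.
  apply Rle_plus_epsilon. intros e He.
  destruct (Hconv e He) as [N0 HN].
  specialize (HN (K + N0)%nat ltac:(lia)). specialize (Hj N0).
  assert (Hrj: 0 <= r^N0) by (apply pow_le; auto).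
  assert (Cmod c * (1 - r ^ N0) / (1 - r) <= Cmod c * (1/(1-r))).
  { unfold Rdiv. rewrite Rmult_assoc. apply Rmult_le_compat_l; [lra|].
    rewrite Rmult_1_l. assert (hi: 0 < /(1-r)) by (apply Rinv_0_lt_compat; lra). nra. }
  replace (psC f K) with (psC f (K+N0) + - (psC f (K+N0) - psC f K))%C by ring.
  eapply Rle_trans; [apply Cmod_triangle|]. rewrite Cmod_opp. fold c. lra.
Qed.


Lemma psR_state b2 eps eps' l : PR b2 = 0 -> b2 <> 0 -> forall N,
  psR (fun n => IZR (dd eps eps' l n) * powerRZ b2 (l + Z.of_nat n)) N
  = powerRZ b2 (l + Z.of_nat N) * vR b2 (st eps eps' l N).
Proof. intros H Hb. induction N.
  - simpl. ring.
  - cbn [psR st]. rewrite IHN.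
    rewrite Nat2Z.inj_succ, <- Z.add_1_r, Z.add_assoc, (powerRZ_add b2 (l + Z.of_nat N) 1) by auto.
    replace (powerRZ b2 1) with b2 by (simpl; ring).
    transitivity (powerRZ b2 (l+Z.of_nat N) * (b2 * vR b2 (nxt (st eps eps' l N) (dd eps eps' l N)))); [rewrite vR_nxt by auto; ring | ring]. Qed.

Lemma psC_state b3 eps eps' l : PC b3 = RtoC 0 -> b3 <> RtoC 0 -> forall N,
  psC (fun n => RtoC (IZR (dd eps eps' l n)) * Cpowz b3 (l + Z.of_nat n))%C N
  = (Cpowz b3 (l + Z.of_nat N) * vC b3 (st eps eps' l N))%C.
Proof. intros H Hb. induction N.
  - simpl. ring.
  - cbn [psC st]. rewrite IHN.
    rewrite Nat2Z.inj_succ, <- Z.add_1_r, Z.add_assoc, (Cpowz_succ b3 (l + Z.of_nat N)) by auto.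
    transitivity (Cpowz b3 (l+Z.of_nat N) * (b3 * vC b3 (nxt (st eps eps' l N) (dd eps eps' l N))))%C; [rewrite vC_nxt by auto; ring | ring]. Qed.

Lemma psR_split b2 eps eps' l : (l < 4)%Z -> forall N,
  psR (fun n => IZR (dd eps eps' l n) * powerRZ b2 (l + Z.of_nat n)) N
  = psR (term_R b2 l eps') N - psR (term_R b2 4 eps) (Z.to_nat (l + Z.of_nat N - 4)).
Proof. intros hl. induction N.
  - simpl. replace (Z.to_nat (l + 0 - 4)) with 0%nat by lia. simpl. ring.
  - cbn [psR]. rewrite IHN. unfold dd, term_R. rewrite minus_IZR, IZR_Zd.
    destruct (Z.leb_spec 4 (l + Z.of_nat N)) as [h|h].
    + replace (Z.to_nat (l + Z.of_nat (S N) - 4)) with (S (Z.to_nat (l + Z.of_nat N - 4))) by lia.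
      cbn [psR]. rewrite IZR_Zd.
      replace (4 + Z.of_nat (Z.to_nat (l + Z.of_nat N - 4)))%Z with (l + Z.of_nat N)%Z by lia.
      ring.
    + replace (Z.to_nat (l + Z.of_nat (S N) - 4)) with (Z.to_nat (l + Z.of_nat N - 4)) by lia.
      ring. Qed.

Lemma psC_split b3 eps eps' l : (l < 4)%Z -> forall N,
  psC (fun n => RtoC (IZR (dd eps eps' l n)) * Cpowz b3 (l + Z.of_nat n))%C N
  = (psC (term_C b3 l eps') N - psC (term_C b3 4 eps) (Z.to_nat (l + Z.of_nat N - 4)))%C.
Proof. intros hl. induction N.
  - simpl. replace (Z.to_nat (l + 0 - 4)) with 0%nat by lia. simpl. ring.
  - cbn [psC]. rewrite IHN. unfold dd, term_C. rewrite minus_IZR, IZR_Zd, RtoC_minus.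
    destruct (Z.leb_spec 4 (l + Z.of_nat N)) as [h|h].
    + replace (Z.to_nat (l + Z.of_nat (S N) - 4)) with (S (Z.to_nat (l + Z.of_nat N - 4))) by lia.
      cbn [psC]. rewrite IZR_Zd.
      replace (4 + Z.of_nat (Z.to_nat (l + Z.of_nat N - 4)))%Z with (l + Z.of_nat N)%Z by lia.
      ring.
    + replace (Z.to_nat (l + Z.of_nat (S N) - 4)) with (Z.to_nat (l + Z.of_nat N - 4)) by lia.
      ring. Qed.

Lemma g_grows (l : Z) : forall M, exists N0, forall N, (N0 <= N)%nat -> (M <= Z.to_nat (l + Z.of_nat N - 4))%nat.
Proof. intros M. exists (M + Z.to_nat (4 - l))%nat. intros N HN. lia. Qed.

Lemma Rabs_Im_le c : Rabs (Im c) <= Cmod c.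
Proof. pose proof (Cmod2_alt c). pose proof (Cmod_ge_0 c). pose proof (Rabs_pos (Im c)).
  assert (Rabs (Im c) ^ 2 = Im c ^ 2) by apply pow2_abs.
  nra. Qed.

Lemma all_inb b2 x y eps eps' l sR sC :
  PR b2 = 0 -> b2 < 0 -> PC (x,y) = RtoC 0 -> 0 < y -> (l < 4)%Z ->
  is_series (term_R b2 4 eps) sR -> is_series (term_R b2 l eps') sR ->
  is_series (term_C (x,y) 4 eps) sC -> is_series (term_C (x,y) l eps') sC ->
  forall n, inb b2 x y (st eps eps' l n).
Proof.
  intros H1 H2 H3 H4 hl hR hR' hC hC' n.
  pose proof (enc_all b2 x y H1 H2 H3 H4) as E.
  destruct E as (E1&E2&E3&E4&E5&_).
  assert (Hb2: Rabs b2 <= 0.775) by (apply Rabs_le_between; lra).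
  assert (Hb3: Cmod (x,y) <= 0.85).
  { pose proof (Cmod2_alt (x,y)). pose proof (Cmod_ge_0 (x,y)). simpl in H. nra. }
  assert (Hb3nz: (x,y) <> RtoC 0) by (intro E; injection E; lra).
  assert (HR: Rabs (vR b2 (st eps eps' l n)) <= 40/9).
  { replace (40/9) with (1/(1-0.775)) by lra.
    apply (tailR b2 0.775 l (dd eps eps' l) (fun N => vR b2 (st eps eps' l N))); try lra.
    - apply dd_range.
    - apply psR_state; auto; lra.
    - intros e He. destruct (conv_R _ _ sR _ hR' hR (g_grows l) e He) as [N0 HN].
      exists N0. intros N HN'. rewrite psR_split by auto. apply HN; auto. }
  assert (HC: Cmod (vC (x,y) (st eps eps' l n)) <= 20/3).
  { replace (20/3) with (1/(1-0.85)) by lra.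
    apply (tailC (x,y) 0.85 l (dd eps eps' l) (fun N => vC (x,y) (st eps eps' l N))); try lra; auto.
    - apply dd_range.
    - apply psC_state; auto.
    - intros e He. destruct (conv_C _ _ sC _ hC' hC (g_grows l) e He) as [N0 HN].
      exists N0. intros N HN'. rewrite psC_split by auto. apply HN; auto. }
  rewrite vC_parts in HC.
  split; [exact HR|]. split.
  - eapply Rle_trans; [|exact HC]. apply (re_le_Cmod (reC x y (st eps eps' l n), imC x y (st eps eps' l n))).
  - eapply Rle_trans; [|exact HC]. apply (Rabs_Im_le (reC x y (st eps eps' l n), imC x y (st eps eps' l n))).
Qed.


Lemma closure_step a d : mem reachL a = true -> In d digs ->
  mem reachL (nxt a d) = true \/ mem badL (nxt a d) = true.
Proof. intros Ha Hd. apply mem_In in Ha. pose proof closure_check as C. rewrite forallb_forall in C.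
  specialize (C a Ha). rewrite forallb_forall in C. specialize (C d Hd). apply orb_prop in C. exact C. Qed.

Lemma dd_in eps eps' l n : In (dd eps eps' l n) digs.
Proof. pose proof (dd_range eps eps' l n). unfold digs. simpl.
  assert (dd eps eps' l n = -1 \/ dd eps eps' l n = 0 \/ dd eps eps' l n = 1)%Z by lia.
  intuition. Qed.

Lemma reach_all b2 x y eps eps' l : Enc b2 x y -> (forall n, inb b2 x y (st eps eps' l n)) ->
  forall n, mem reachL (st eps eps' l n) = true.
Proof. intros E Hin. induction n.
  - vm_compute. reflexivity.
  - cbn [st]. destruct (closure_step _ _ IHn (dd_in eps eps' l n)) as [h|h]; auto.
    exfalso. apply mem_In in h. apply (bad_viol b2 x y E _ h). apply (Hin (S n)). Qed.

Lemma rank_step a r d : In (a,r) rankL -> In d digs ->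
  mem reachL (nxt a d) = false \/ exists r', lookup rankL (nxt a d) = Some r' /\ (r' < r)%nat.
Proof. intros Ha Hd. pose proof rank_check as C. rewrite forallb_forall in C.
  specialize (C (a,r) Ha). cbv beta iota in C. rewrite forallb_forall in C. specialize (C d Hd).
  apply orb_prop in C. destruct C as [C|C].
  - left. apply negb_true_iff in C. exact C.
  - right. destruct (lookup rankL (nxt a d)) as [r'|]; [|discriminate].
    exists r'. split; auto. apply Nat.ltb_lt. exact C. Qed.

Lemma dead_refute eps eps' l : (forall n, mem reachL (st eps eps' l n) = true) ->
  forall r a r', lookup rankL a = Some r' -> (r' <= r)%nat -> forall n, st eps eps' l n = a -> False.
Proof. intros Hreach r. induction r as [|r IH]; intros a r' Hl Hle n Hn;
  destruct (rank_step a r' (dd eps eps' l n) (lookup_In _ _ _ Hl) (dd_in eps eps' l n)) as [h|[r'' [h1 h2]]].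
  - pose proof (Hreach (S n)) as h'. cbn [st] in h'. rewrite Hn in h'. congruence.
  - lia.
  - pose proof (Hreach (S n)) as h'. cbn [st] in h'. rewrite Hn in h'. congruence.
  - apply (IH (nxt a (dd eps eps' l n)) r'' h1 ltac:(lia) (S n)). cbn [st]. rewrite Hn. reflexivity.
Qed.

Lemma alive_all eps eps' l : (forall n, mem reachL (st eps eps' l n) = true) ->
  forall n, mem aliveL (st eps eps' l n) = true.
Proof. intros Hreach n. pose proof cover_check as C. rewrite forallb_forall in C.
  specialize (C _ (mem_In _ _ (Hreach n))). apply orb_prop in C. destruct C as [C|C]; auto.
  destruct (lookup rankL (st eps eps' l n)) as [r|] eqn:E; [|discriminate].
  exfalso. apply (dead_refute eps eps' l Hreach r (st eps eps' l n) r E (le_n _) n eq_refl). Qed.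

Definition run (bs : list bool) : Z4 := fold_left (fun a b => nxt a (Zd b)) bs (0,0,0,0)%Z.

Lemma st_run eps eps' l : forall n, (Z.of_nat n <= 4 - l)%Z ->
  st eps eps' l n = run (map (fun k => eps' (l + Z.of_nat k)%Z) (seq 0 n)).
Proof. induction n; intros Hn.
  - reflexivity.
  - cbn [st]. rewrite IHn by lia. unfold run. rewrite seq_S, map_app, fold_left_app. simpl.
    f_equal. unfold dd. destruct (Z.leb_spec 4 (l + Z.of_nat n)); [lia|]. lia. Qed.

Lemma win eps' l : D_inf l eps' -> forall k,
  negb (eps' (l + Z.of_nat k)%Z && eps' (l + Z.of_nat (S k))%Z && eps' (l + Z.of_nat (S (S k)))%Z && eps' (l + Z.of_nat (S (S (S k))))%Z) = true.
Proof. intros H k. specialize (H (l + Z.of_nat k)%Z ltac:(lia)).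
  replace (l + Z.of_nat (S k))%Z with (l + Z.of_nat k + 1)%Z by lia.
  replace (l + Z.of_nat (S (S k)))%Z with (l + Z.of_nat k + 2)%Z by lia.
  replace (l + Z.of_nat (S (S (S k))))%Z with (l + Z.of_nat k + 3)%Z by lia.
  destruct (eps' (l + Z.of_nat k)%Z), (eps' (l + Z.of_nat k + 1)%Z), (eps' (l + Z.of_nat k + 2)%Z), (eps' (l + Z.of_nat k + 3)%Z);
  try reflexivity. exfalso; apply H; auto. Qed.

Lemma comb8 e0 e1 e2 e3 e4 e5 e6 e7 : e0 = true ->
  negb (e0&&e1&&e2&&e3) = true -> negb (e1&&e2&&e3&&e4) = true -> negb (e2&&e3&&e4&&e5) = true ->
  negb (e3&&e4&&e5&&e6) = true -> negb (e4&&e5&&e6&&e7) = true ->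
  mem aliveL (run [e0;e1;e2;e3;e4;e5;e6;e7]) = false.
Proof. intros ->. destruct e1, e2, e3, e4, e5, e6, e7; intros; vm_compute in *; first [reflexivity | discriminate]. Qed.

Lemma comb7 e0 e1 e2 e3 e4 e5 e6 : e0 = true ->
  negb (e0&&e1&&e2&&e3) = true -> negb (e1&&e2&&e3&&e4) = true -> negb (e2&&e3&&e4&&e5) = true ->
  negb (e3&&e4&&e5&&e6) = true ->
  mem aliveL (run [e0;e1;e2;e3;e4;e5;e6]) = true ->
  e1 = true /\ e2 = false /\ e3 = true /\ e4 = false /\ e5 = false /\ e6 = true.
Proof. intros ->. destruct e1, e2, e3, e4, e5, e6; intros; vm_compute in *; try discriminate; repeat split. Qed.

Lemma comb6 e0 e1 e2 e3 e4 e5 : e0 = true ->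
  negb (e0&&e1&&e2&&e3) = true -> negb (e1&&e2&&e3&&e4) = true -> negb (e2&&e3&&e4&&e5) = true ->
  mem aliveL (run [e0;e1;e2;e3;e4;e5]) = true ->
  e1 = true /\ e2 = false /\ e3 = true /\ e4 = false /\ e5 = false.
Proof. intros ->. destruct e1, e2, e3, e4, e5; intros; vm_compute in *; try discriminate; repeat split. Qed.

Lemma comb5 e0 e1 e2 e3 e4 : e0 = true ->
  negb (e0&&e1&&e2&&e3) = true -> negb (e1&&e2&&e3&&e4) = true ->
  mem aliveL (run [e0;e1;e2;e3;e4]) = true ->
  e1 = true /\ e2 = false /\ e3 = true /\ e4 = false.
Proof. intros ->. destruct e1, e2, e3, e4; intros; vm_compute in *; try discriminate; repeat split. Qed.


Theorem lemma3p5 (b2 : R) (b3 : C)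
  (hb2 : PR b2 = 0) (hb2neg : b2 < 0)
  (hb3 : PC b3 = RtoC 0) (hb3im : 0 < Im b3)
  (eps eps' : Z -> bool) (l : Z)
  (heps : D_inf 4 eps) (heps' : D_inf l eps')
  (hl : (l < 4)%Z) (hlead : eps' l = true)
  (sR : R) (sC : C)
  (hR : is_series (term_R b2 4 eps) sR) (hR' : is_series (term_R b2 l eps') sR)
  (hC : is_series (term_C b3 4 eps) sC) (hC' : is_series (term_C b3 l eps') sC) :
  S_set b2 b3 (head_sum b2 b3 l eps') /\
  (-3 <= l)%Z /\
  (l = (-3)%Z -> head_sum b2 b3 l eps' =
     RCadd (alpha_pow b2 b3 (-3)) (RCadd (alpha_pow b2 b3 (-2))
       (RCadd (alpha_pow b2 b3 0) (alpha_pow b2 b3 3)))) /\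
  (l = (-2)%Z -> head_sum b2 b3 l eps' =
     RCadd (alpha_pow b2 b3 (-2)) (RCadd (alpha_pow b2 b3 (-1)) (alpha_pow b2 b3 1))) /\
  (l = (-1)%Z -> head_sum b2 b3 l eps' =
     RCadd (alpha_pow b2 b3 (-1)) (RCadd (alpha_pow b2 b3 0) (alpha_pow b2 b3 2))).
Proof.
  destruct b3 as [x y]. simpl in hb3im.
  destruct (Z_lt_le_dec l 0) as [hneg|hpos].
  - pose proof (enc_all b2 x y hb2 hb2neg hb3 hb3im) as E.
    pose proof (all_inb b2 x y eps eps' l sR sC hb2 hb2neg hb3 hb3im hl hR hR' hC hC') as Hin.
    pose proof (alive_all eps eps' l (reach_all b2 x y eps eps' l E Hin)) as Hal.
    pose proof (win eps' l heps') as W.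
    assert (h0 : eps' (l + Z.of_nat 0)%Z = true) by (rewrite Z.add_0_r; exact hlead).
    destruct (Z_le_gt_dec l (-4)) as [h4|h4].
    + exfalso. pose proof (Hal 8%nat) as A. rewrite st_run in A by lia. cbn [seq map] in A.
      rewrite (comb8 _ _ _ _ _ _ _ _ h0 (W 0%nat) (W 1%nat) (W 2%nat) (W 3%nat) (W 4%nat)) in A.
      discriminate.
    + assert (l = -3 \/ l = -2 \/ l = -1)%Z as [-> | [-> | ->]] by lia.
      * pose proof (Hal 7%nat) as A. rewrite st_run in A by lia. cbn [seq map] in A.
        destruct (comb7 _ _ _ _ _ _ _ h0 (W 0%nat) (W 1%nat) (W 2%nat) (W 3%nat) A) as (e1&e2&e3&e4&e5&e6).
        simpl in h0, e1, e2, e3, e4, e5, e6.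
        assert (Hh: head_sum b2 (x,y) (-3) eps' = RCadd (alpha_pow b2 (x,y) (-3)) (RCadd (alpha_pow b2 (x,y) (-2))
           (RCadd (alpha_pow b2 (x,y) 0) (alpha_pow b2 (x,y) 3)))).
        { unfold head_sum. simpl. unfold RCadd, RCzero, alpha_pow, term_R, term_C. simpl.
          rewrite h0, e1, e2, e3, e4, e5, e6. simpl. f_equal; ring. }
        split; [|split; [lia|split; [intros _; exact Hh|split; intros; discriminate]]].
        right; right; right. left. exact Hh.
      * pose proof (Hal 6%nat) as A. rewrite st_run in A by lia. cbn [seq map] in A.
        destruct (comb6 _ _ _ _ _ _ h0 (W 0%nat) (W 1%nat) (W 2%nat) A) as (e1&e2&e3&e4&e5).
        simpl in h0, e1, e2, e3, e4, e5.
        assert (Hh: head_sum b2 (x,y) (-2) eps' =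
          RCadd (alpha_pow b2 (x,y) (-2)) (RCadd (alpha_pow b2 (x,y) (-1)) (alpha_pow b2 (x,y) 1))).
        { unfold head_sum. simpl. unfold RCadd, RCzero, alpha_pow, term_R, term_C. simpl.
          rewrite h0, e1, e2, e3, e4, e5. simpl. f_equal; ring. }
        split; [|split; [lia|split; [intros; discriminate|split; [intros _; exact Hh| intros; discriminate]]]].
        right; right; left. left. exact Hh.
      * pose proof (Hal 5%nat) as A. rewrite st_run in A by lia. cbn [seq map] in A.
        destruct (comb5 _ _ _ _ _ h0 (W 0%nat) (W 1%nat) A) as (e1&e2&e3&e4).
        simpl in h0, e1, e2, e3, e4.
        assert (Hh: head_sum b2 (x,y) (-1) eps' =
          RCadd (alpha_pow b2 (x,y) (-1)) (RCadd (alpha_pow b2 (x,y) 0) (alpha_pow b2 (x,y) 2))).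
        { unfold head_sum. simpl. unfold RCadd, RCzero, alpha_pow, term_R, term_C. simpl.
          rewrite h0, e1, e2, e3, e4. simpl. f_equal; ring. }
        split; [|split; [lia|split; [intros; discriminate|split; [intros; discriminate| intros _; exact Hh]]]].
        right; left. left. exact Hh.
  - split; [|split; [lia|split; [intros; lia|split; intros; lia]]].
    left.
    assert (l = 0 \/ l = 1 \/ l = 2 \/ l = 3)%Z as [-> | [-> | [-> | ->]]] by lia.
    + exists (eps' 0%Z), (eps' 1%Z), (eps' 2%Z), (eps' 3%Z). split.
      * apply (heps' 0%Z). lia.
      * left. unfold head_sum. simpl. unfold RCadd, RCzero, alpha_pow, term_R, term_C, bR. simpl. f_equal; ring.
    + exists false, (eps' 1%Z), (eps' 2%Z), (eps' 3%Z). split.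
      * intros (Hf&_); discriminate.
      * left. unfold head_sum. simpl. unfold RCadd, RCzero, alpha_pow, term_R, term_C, bR. simpl. f_equal; ring.
    + exists false, false, (eps' 2%Z), (eps' 3%Z). split.
      * intros (Hf&_); discriminate.
      * left. unfold head_sum. simpl. unfold RCadd, RCzero, alpha_pow, term_R, term_C, bR. simpl. f_equal; ring.
    + exists false, false, false, (eps' 3%Z). split.
      * intros (Hf&_); discriminate.
      * left. unfold head_sum. simpl. unfold RCadd, RCzero, alpha_pow, term_R, term_C, bR. simpl. f_equal; ring.
Qed.
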